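(* Let $p$ be an odd prime and let $x$ be a $p$-adic integer. Then $$\sum_{k=0}^{p-1}\frac{\binom{2k}{k}}{4^k}\, d_k(x)^2 \equiv (-1)^{\frac{p-1}{2}}\sum_{j=0}^{\frac{p-1}{2}}\binom{x}{j}\binom{x+j}{j}\binom{j}{\frac{p-1}{2}-j}4^j \pmod p.$$
   Context: For a $p$-adic number $x$ and an integer $k\ge 0$, $\binom{x}{k}=\frac{x(x-1)\cdots(x-k+1)}{k!}$; for integers $j\ge0$ and $m$, $\binom{j}{m}=0$ if $m<0$ or $m>j$. The polynomials $d_n(x)$ are defined by $d_n(x)=\sum_{k=0}^{n}\binom{n}{k}\binom{x}{k}2^k$. Congruences are taken in the ring of $p$-adic integers. *)

(* Defs.v *)
From HB Require Import structures.
From mathcomp Require Import all_boot all_order all_algebra.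
Set Implicit Arguments. Unset Strict Implicit. Unset Printing Implicit Defensive.
Import Order.TTheory GRing.Theory Num.Theory.
Local Open Scope ring_scope.

Definition binomR (F : fieldType) (x : F) (k : nat) : F :=
  (\prod_(i < k) (x - i%:R)) / (k`!)%:R.

Definition dpoly (F : fieldType) (n : nat) (x : F) : F :=
  \sum_(k < n.+1) ('C(n, k))%:R * binomR x k * 2 ^+ k.

(* Main.v *)
Require Import Defs.
From HB Require Import structures.
From mathcomp Require Import all_boot all_order all_algebra.
From mathcomp Require Import ring lra zify.
Import Order.TTheory GRing.Theory Num.Theory.
Local Open Scope ring_scope.


Lemma binL (R : comPzRingType) (N m : nat) :
  (m.+1)%:R * ('C(N, m.+1))%:R = (N%:R - m%:R) * ('C(N, m))%:R :> R.
Proof.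
case: (leqP m N) => hmN.
  by rewrite -natrM mul_bin_left natrM natrB.
by rewrite !bin_small ?mulr0 // ltnW.
Qed.

Lemma binD (R : comPzRingType) (N m : nat) :
  N%:R * ('C(N.-1, m))%:R = (N%:R - m%:R) * ('C(N, m))%:R :> R.
Proof.
case: (leqP m N) => hmN.
  by rewrite -natrM mul_bin_down natrM natrB.
rewrite !bin_small ?mulr0 //; case: N hmN => //= N h; exact: ltn_trans h.
Qed.

Lemma binPas (R : comPzRingType) (N m : nat) :
  ('C(N.+1, m.+1))%:R = ('C(N, m.+1))%:R + ('C(N, m))%:R :> R.
Proof. by rewrite binS natrD. Qed.

Lemma sum_trunc (R : nmodType) (F : nat -> R) (a N : nat) :
  (a <= N)%N -> (forall i, (a <= i)%N -> F i = 0) ->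
  \sum_(i < N) F i = \sum_(i < a) F i.
Proof.
move=> haN hF.
rewrite -!(big_mkord xpredT) (@big_cat_nat _ _ _ a 0 N _ _ (leq0n a) haN) /=.
rewrite [X in _ + X]big1_seq ?addr0 // => i /andP[_].
by rewrite mem_index_iota => /andP[hi _]; exact: hF.
Qed.

Definition Dn (n m : nat) : nat := \sum_(i < n.+1) 'C(n, i) * 'C(m, i) * 2 ^ i.

Lemma DnE (R : comPzRingType) n m N : (n < N)%N ->
  (Dn n m)%:R = \sum_(i < N) ('C(n, i))%:R * ('C(m, i))%:R * 2 ^+ i :> R.
Proof.
move=> hN; rewrite (@sum_trunc _ (fun i => ('C(n, i))%:R * ('C(m, i))%:R * 2 ^+ i) n.+1 N hN) /Dn ?natr_sum.
  by apply: eq_bigr => i _; rewrite !natrM natrX.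
by move=> i hi; rewrite bin_small ?mul0r.
Qed.

Lemma per_i (R : comPzRingType) (n i : nat) :
  (n.+1)%:R * ('C(n.+1, i))%:R - n%:R * ('C(n.-1, i))%:R
  = (i.*2.+1)%:R * ('C(n, i))%:R + i%:R * ('C(n, i.-1))%:R :> R.
Proof.
case: i => [|k].
  by rewrite !bin0 mul0r addr0 !mulr1 mulrSr addrAC subrr add0r.
rewrite binPas binD.
have h := binL R n k.
move: h; rewrite -addnn /=.
move: ('C(n, k.+1))%:R ('C(n, k))%:R => Y X h.
apply/eqP; rewrite -subr_eq0; apply/eqP.
transitivity ((-1 : R) * ((k.+1)%:R * Y - (n%:R - k%:R) * X)).
  ring.
by rewrite h subrr mulr0.
Qed.

Lemma Dn_rec (R : comPzRingType) n m :
  (n.+1)%:R * (Dn n.+1 m)%:R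
  = (m.*2.+1)%:R * (Dn n m)%:R + n%:R * (Dn n.-1 m)%:R :> R.
Proof.
rewrite (@DnE R n.+1 m n.+2) // (@DnE R n m n.+2) // (@DnE R n.-1 m n.+2); last first.
  by apply: (leq_ltn_trans (leq_pred n)); apply: ltnW.
rewrite !mulr_sumr.
have key : \sum_(i < n.+2) (m.*2)%:R * (('C(n, i))%:R * ('C(m, i))%:R * 2 ^+ i)
   = \sum_(i < n.+2) ('C(m, i))%:R * 2 ^+ i * ((i.*2)%:R * ('C(n, i))%:R + i%:R * ('C(n, i.-1))%:R) :> R.
  have e1 : forall i : 'I_n.+2, (m.*2)%:R * (('C(n, i))%:R * ('C(m, i))%:R * 2 ^+ i)
     = ('C(m, i))%:R * 2 ^+ i * ((i.*2)%:R * ('C(n, i))%:R) +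
       2 * ((i.+1)%:R * ('C(m, i.+1))%:R) * 2 ^+ i * ('C(n, i))%:R :> R.
    move=> i; rewrite binL -!addnn.
    move: ('C(n, i))%:R ('C(m, i))%:R (2 ^+ i : R) => a b c; ring.
  rewrite (eq_bigr _ (fun i _ => e1 i)) big_split /=.
  under [in RHS]eq_bigr do rewrite mulrDr.
  rewrite [in RHS]big_split /=; congr (_ + _).
  rewrite -(@sum_trunc _ (fun i => ('C(m, i))%:R * 2 ^+ i * (i%:R * ('C(n, i.-1))%:R)) n.+2 n.+3) //; last first.
    by move=> i hi; rewrite (@bin_small n) ?mulr0 ?mul0r //; case: i hi => // i /=; rewrite ltnS.
  rewrite [in RHS]big_ord_recl /= mul0r mulr0 add0r.
  apply: eq_bigr => i _ /=; rewrite /bump leq0n add1n add0n exprS.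
  move: ('C(n, i))%:R ('C(m, i.+1))%:R (2 ^+ i : R) => a b c; ring.
have e2 : forall i : 'I_n.+2,
   (n.+1)%:R * (('C(n.+1, i))%:R * ('C(m, i))%:R * 2 ^+ i) - n%:R * (('C(n.-1, i))%:R * ('C(m, i))%:R * 2 ^+ i)
   = ('C(m, i))%:R * 2 ^+ i * ((i.*2.+1)%:R * ('C(n, i))%:R + i%:R * ('C(n, i.-1))%:R) :> R.
  move=> i; rewrite -per_i.
  move: ('C(n.+1, i))%:R ('C(n.-1, i))%:R ('C(m, i))%:R (2 ^+ i : R) => a b c d; ring.
apply/eqP; rewrite -subr_eq -sumrB (eq_bigr _ (fun i _ => e2 i)); apply/eqP.
under [in RHS]eq_bigr do rewrite -[(m.*2.+1)%:R]natr1 mulrDl mul1r.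
rewrite [in RHS]big_split /= key -big_split /=; apply: eq_bigr => i _.
rewrite -[(i.*2.+1)%:R]natr1.
move: ('C(n, i))%:R ('C(m, i))%:R (2 ^+ i : R) ('C(n, i.-1))%:R (i.*2)%:R (i%:R : R) => a b c d e f; ring.
Qed.

Lemma perj_alg (n i : nat) (B0 B1 B2 B3 : rat) :
  ((i.*2).+1)%:R * B1 = (((n + i).+1)%:R - (i.*2)%:R) * B0 ->
  ((i.*2).+2)%:R * B2 = (((n + i).+1)%:R - ((i.*2).+1)%:R) * B1 ->
  ((i.*2).+3)%:R * B3 = (((n + i).+1)%:R - ((i.*2).+2)%:R) * B2 ->
  (n.+2)%:R ^+ 2 * ((B2 + B1) + (B1 + B0)) - (n.+1)%:R ^+ 2 * B2
  = ((i.*2).+3)%:R ^+ 2 * ((B2 + B1) + 2 * (B3 + B2)) + (i.+1)%:R ^+ 2 * (B0 + 2 * B1).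
Proof.
move=> h1 h2 h3.
have hi : 0 <= i%:R :> rat by rewrite ler0n.
have n1 : ((i.*2).+1)%:R != 0 :> rat by rewrite pnatr_eq0.
have n2 : ((i.*2).+2)%:R != 0 :> rat by rewrite pnatr_eq0.
have n3 : ((i.*2).+3)%:R != 0 :> rat by rewrite pnatr_eq0.
have e1 : B1 = (((n + i).+1)%:R - (i.*2)%:R) * B0 / ((i.*2).+1)%:R.
  by rewrite -h1; field; apply/eqP; rewrite -?addnn ?natrD; lra.
have e2 : B2 = (((n + i).+1)%:R - ((i.*2).+1)%:R) * B1 / ((i.*2).+2)%:R by rewrite -h2; field; apply/eqP; rewrite -?addnn ?natrD; lra.
have e3 : B3 = (((n + i).+1)%:R - ((i.*2).+2)%:R) * B2 / ((i.*2).+3)%:R by rewrite -h3; field; apply/eqP; rewrite -?addnn ?natrD; lra.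
rewrite e3 e2 e1.
move: n1 n2 n3; rewrite -!addnn => n1 n2 n3.
field.
by apply/and3P; split; apply/eqP; lra.
Qed.

Lemma perj (n j : nat) :
 (n.+2)%:R ^+ 2 * ('C(n.+2 + j, j.*2))%:R - (n.+1)%:R ^+ 2 * ('C(n + j, j.*2))%:R
 = (j.*2.+1)%:R ^+ 2 * (('C(n.+1 + j, j.*2))%:R + 2 * ('C(n.+1 + j, j.*2.+1))%:R)
   + j%:R ^+ 2 * (('C(n.+1 + j.-1, (j.-1).*2))%:R + 2 * ('C(n.+1 + j.-1, (j.-1).*2.+1))%:R) :> rat.
Proof.
case: j => [|i].
  rewrite /= !addn0 !bin0 !bin1.
  rewrite double0; ring.
have -> : (n.+2 + i.+1 = ((n + i).+1).+2)%N by rewrite addnS !addSn.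
have -> : (n + i.+1 = (n + i).+1)%N by rewrite addnS.
have -> : (n.+1 + i.+1 = ((n + i).+1).+1)%N by rewrite addnS addSn.
have -> : (n.+1 + i.+1.-1 = (n + i).+1)%N by rewrite addSn.
rewrite /= !doubleS.
rewrite (binPas _ (n + i).+2 (i.*2).+1) (binPas _ (n + i).+1 (i.*2).+1) (binPas _ (n + i).+1 i.*2).
rewrite (binPas _ (n + i).+1 (i.*2).+2).
apply: perj_alg; exact: binL.
Qed.

Definition cj (m j : nat) : nat := 'C(m, j) * 'C(m + j, j) * 4 ^ j.

Lemma cj_rec m j : (m.*2.+1)%:R ^+ 2 * (cj m j)%:R
  = (j.+1)%:R ^+ 2 * (cj m j.+1)%:R + (j.*2.+1)%:R ^+ 2 * (cj m j)%:R :> rat.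
Proof.
rewrite /cj !natrM !natrX.
have h1 := binL rat m j.
have h2 : (j.+1)%:R * ('C(m + j.+1, j.+1))%:R = ((m + j).+1)%:R * ('C(m + j, j))%:R :> rat.
  by rewrite -!natrM addnS -mul_bin_diag.
move: h1 h2; rewrite [(4%:R : rat) ^+ j.+1]exprS -!addnn.
move: ('C(m, j))%:R ('C(m, j.+1))%:R ('C(m + j, j))%:R ('C(m + j.+1, j.+1))%:R (4%:R ^+ j : rat) => a a' b b' f h1 h2.
transitivity (((j.+1)%:R * a') * ((j.+1)%:R * b') * 4%:R * f + ((j + j).+1)%:R ^+ 2 * (a * b * f)); last by ring.
rewrite h1 h2; ring.
Qed.

Definition Rs (m n : nat) : rat := \sum_(j < m.+1) (cj m j)%:R * ('C(n + j, j.*2))%:R.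
Definition Us (m n : nat) : rat := \sum_(j < m.+1) (cj m j)%:R * ('C(n + j, j.*2.+1))%:R.

Lemma Dn0 m : Dn 0 m = 1%N.
Proof. by rewrite /Dn big_ord_recl big_ord0 /= !bin0. Qed.

Lemma Dn1 m : (Dn 1 m)%:R = (m.*2.+1)%:R :> rat.
Proof. by have := Dn_rec rat 0 m; rewrite /= Dn0 mul0r addr0 !mulr1 mul1r. Qed.

Lemma Rs0 m : Rs m 0 = 1.
Proof.
rewrite /Rs big_ord_recl big1 ?addr0 /=.
  by rewrite /cj !addn0 double0 !bin0 expn0 !muln1 mulr1.
by move=> i _; rewrite bin_small ?mulr0 // /bump /=; lia.
Qed.

Lemma Rs1 m : Rs m 1 = (m.*2.+1)%:R ^+ 2.
Proof.
rewrite /Rs; case: m => [|m].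
  by rewrite big_ord_recl big_ord0 /cj /= addr0 expr1n.
rewrite big_ord_recl big_ord_recl big1 ?addr0 /=.
  rewrite /cj /bump /= !addn0 !bin0 addn1 !bin1 binn expn0 expn1 !mulr1 !natrM -addnn; ring.
move=> i _; rewrite bin_small ?mulr0 // /bump /=; lia.
Qed.

Lemma Us1 m : Us m 1 = 1.
Proof.
rewrite /Us big_ord_recl big1 ?addr0 /=.
  by rewrite /cj !addn0 double0 !bin0 bin1 expn0 !muln1 mulr1.
by move=> i _; rewrite bin_small ?mulr0 // /bump /=; lia.
Qed.

Lemma UsS m n : Us m n.+2 = Rs m n.+1 + Us m n.+1.
Proof.
rewrite /Rs /Us -big_split; apply: eq_bigr => j _ /=.
by rewrite -mulrDr addSn binPas addrC.
Qed.

Lemma RsS m n : (n.+2)%:R ^+ 2 * Rs m n.+2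
  = (m.*2.+1)%:R ^+ 2 * (Rs m n.+1 + 2 * Us m n.+1) + (n.+1)%:R ^+ 2 * Rs m n.
Proof.
apply/eqP; rewrite -subr_eq; apply/eqP.
rewrite /Rs /Us !mulr_sumr -sumrB.
pose E j := ('C(n.+1 + j, j.*2))%:R + 2 * ('C(n.+1 + j, j.*2.+1))%:R : rat.
pose E' j := ('C(n.+1 + j.-1, (j.-1).*2))%:R + 2 * ('C(n.+1 + j.-1, (j.-1).*2.+1))%:R : rat.
have e : forall j : 'I_m.+1,
   (n.+2)%:R ^+ 2 * ((cj m j)%:R * ('C(n.+2 + j, j.*2))%:R) - (n.+1)%:R ^+ 2 * ((cj m j)%:R * ('C(n + j, j.*2))%:R)
   = (j.*2.+1)%:R ^+ 2 * (cj m j)%:R * E j + j%:R ^+ 2 * (cj m j)%:R * E' j.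
  move=> j.
  transitivity (((cj m j)%:R : rat) * ((n.+2)%:R ^+ 2 * ('C(n.+2 + j, j.*2))%:R - (n.+1)%:R ^+ 2 * ('C(n + j, j.*2))%:R)).
    by move: ((cj m j)%:R : rat) (('C(n.+2 + j, j.*2))%:R : rat) (('C(n + j, j.*2))%:R : rat) ((n.+2)%:R : rat) ((n.+1)%:R : rat) => a b c d f; ring.
  rewrite perj /E /E'.
  move: ((cj m j)%:R : rat) ((j.*2.+1)%:R : rat) (j%:R : rat) => a b c.
  move: (('C(n.+1 + j, j.*2))%:R : rat) (('C(n.+1 + j, j.*2.+1))%:R : rat) (('C(n.+1 + j.-1, j.-1.*2))%:R : rat) (('C(n.+1 + j.-1, j.-1.*2.+1))%:R : rat) => x y z w; ring.
rewrite (eq_bigr _ (fun j _ => e j)).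
rewrite -big_split /= mulr_sumr.
have e2 : forall j : 'I_m.+1,
   (m.*2.+1)%:R ^+ 2 * ((cj m j)%:R * ('C(n.+1 + j, j.*2))%:R + 2 * ((cj m j)%:R * ('C(n.+1 + j, j.*2.+1))%:R))
   = (j.*2.+1)%:R ^+ 2 * (cj m j)%:R * E j + (j.+1)%:R ^+ 2 * (cj m j.+1)%:R * E j.
  move=> j; transitivity ((m.*2.+1)%:R ^+ 2 * ((cj m j)%:R : rat) * E j).
    rewrite /E; move: ((m.*2.+1)%:R ^+ 2 : rat) ((cj m j)%:R : rat) (('C(n.+1 + j, j.*2))%:R : rat) (('C(n.+1 + j, j.*2.+1))%:R : rat) => a b c d; ring.
  rewrite cj_rec; move: ((cj m j)%:R : rat) ((cj m j.+1)%:R : rat) ((j.+1)%:R ^+ 2 : rat) ((j.*2.+1)%:R ^+ 2 : rat) (E j) => a b c d f; ring.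
rewrite (eq_bigr _ (fun j _ => e2 j)) !big_split /=; congr (_ + _).
rewrite [in LHS]big_ord_recl [in RHS]big_ord_recr.
rewrite (_ : ((@ord0 m : nat)%:R : rat) = 0) // expr2 !mul0r add0r.
rewrite (_ : cj m (@ord_max m).+1 = 0%N); last by rewrite /cj bin_small.
rewrite mulr0 mul0r Monoid.mulm1.
apply: eq_bigr => i _; rewrite lift0.
by [].
Qed.

Lemma main_id m n :
  [/\ (Dn n m)%:R ^+ 2 = Rs m n, (Dn n.+1 m)%:R ^+ 2 = Rs m n.+1
    & (n.+1)%:R * (Dn n.+1 m)%:R * (Dn n m)%:R = (m.*2.+1)%:R * Us m n.+1 :> rat].
Proof.
elim: n => [|n [IH0 IH1 IHV]].
  by rewrite Dn0 Dn1 Rs0 Rs1 Us1 expr1n !mul1r; split => //; rewrite mulr1.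
have rec := Dn_rec rat n.+1 m; rewrite /= in rec.
have hV : (n.+2)%:R * (Dn n.+2 m)%:R * (Dn n.+1 m)%:R = (m.*2.+1)%:R * Us m n.+2 :> rat.
  rewrite UsS rec -IH1 mulrDr.
  rewrite -IHV.
  move: ((m.*2.+1)%:R : rat) ((Dn n.+1 m)%:R : rat) ((Dn n m)%:R : rat) ((n.+1)%:R : rat) => a b c d; ring.
split => //.
have nz : (n.+2)%:R ^+ 2 != 0 :> rat by rewrite expf_neq0 // pnatr_eq0.
apply: (mulfI nz); rewrite RsS -IH0 -IH1.
transitivity (((n.+2)%:R * (Dn n.+2 m)%:R) ^+ 2 : rat); first by rewrite exprMn.
rewrite rec.
transitivity ((m.*2.+1)%:R ^+ 2 * (Dn n.+1 m)%:R ^+ 2 + 2 * (m.*2.+1)%:R * ((m.*2.+1)%:R * Us m n.+1)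
   + (n.+1)%:R ^+ 2 * (Dn n m)%:R ^+ 2 : rat); last first.
  move: ((m.*2.+1)%:R : rat) ((Dn n.+1 m)%:R : rat) ((Dn n m)%:R : rat) ((n.+1)%:R : rat) (Us m n.+1) => a b c d e; ring.
rewrite -IHV.
move: ((m.*2.+1)%:R : rat) ((Dn n.+1 m)%:R : rat) ((Dn n m)%:R : rat) ((n.+1)%:R : rat) => a b c d; ring.
Qed.


Definition hs (R : comPzRingType) (n a b : nat) : R :=
  \sum_(k < n.+1) (-1) ^+ k * ('C(n, k))%:R * ('C(k + a, b))%:R.

Lemma hsS (R : comPzRingType) n a b : hs R n.+1 a b = hs R n a b - hs R n a.+1 b.
Proof.
rewrite /hs big_ord_recl /=.
under eq_bigr do rewrite /bump /= add1n binS natrD mulrDr mulrDl.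
rewrite big_split /= addrA.
congr (_ + _).
  have e : \sum_(k < n.+2) (-1) ^+ k * ('C(n, k))%:R * ('C(k + a, b))%:R
        = \sum_(k < n.+1) (-1) ^+ k * ('C(n, k))%:R * ('C(k + a, b))%:R :> R.
    by rewrite big_ord_recr /= bin_small // mulr0 mul0r addr0.
  rewrite -e [RHS]big_ord_recl.
  congr (_ + _); by rewrite /= ?bin0.
rewrite -[RHS]sumrN; apply: eq_bigr => i _; rewrite exprS addSnnS.
by rewrite !mulNr mul1r.
Qed.

Lemma hsSS (R : comPzRingType) n a b : hs R n a.+1 b.+1 = hs R n a b.+1 + hs R n a b.
Proof.
rewrite /hs -big_split /=; apply: eq_bigr => i _.
by rewrite addnS binS natrD mulrDr.
Qed.

Lemma hs0 (R : comPzRingType) n a : hs R n a 0 = hs R n a.+1 0.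
Proof. by rewrite /hs; apply: eq_bigr => i _; rewrite !bin0. Qed.

Lemma hsE (R : comPzRingType) n a b :
  hs R n a b = (-1) ^+ n * (if (n <= b)%N then ('C(a, b - n))%:R else 0).
Proof.
elim: n a b => [|n IH] a b.
  by rewrite /hs big_ord_recl big_ord0 addr0 /= subn0 add0n (_ : 'C(0,0) = 1%N) // mulr1.
rewrite (hsS R n a b); case: b => [|b].
  by rewrite -hs0 subrr mulr0.
by rewrite hsSS opprD addrA subrr add0r IH ltnS subSS exprS mulN1r mulNr.
Qed.


Lemma natr_ffact (R : comPzRingType) N i : (N ^_ i)%:R = \prod_(l < i) (N%:R - l%:R) :> R.
Proof.
elim: i => [|i IH]; first by rewrite ffactn0 big_ord0.
rewrite ffactnSr natrM big_ord_recr /= -IH.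
case: (leqP i N) => h; first by rewrite natrB.
by rewrite ffact_small // !mul0r.
Qed.

Lemma Fp_nz p (hp : prime p) k : (0 < k < p)%N -> (k%:R : 'F_p) != 0.
Proof. by case/andP=> h1 h2; rewrite -(dvdn_pcharf (pchar_Fp hp)) gtnNdvd. Qed.

Lemma fact_nz p (hp : prime p) i : (i < p)%N -> ((i`!)%:R : 'F_p) != 0.
Proof.
elim: i => [|i IH] h; first by rewrite fact0 oner_neq0.
by rewrite factS natrM mulf_neq0 ?IH ?Fp_nz // ltnW.
Qed.

Lemma binomR_nat p (hp : prime p) (m i : nat) : (i < p)%N ->
  binomR (m%:R : 'F_p) i = ('C(m, i))%:R.
Proof.
move=> hi; rewrite /binomR -natr_ffact -bin_ffact natrM mulfK //.
exact: fact_nz.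
Qed.

Lemma dpoly_nat p (hp : prime p) k m : (k < p)%N -> dpoly k (m%:R : 'F_p) = (Dn k m)%:R.
Proof.
move=> hk; rewrite /dpoly /Dn natr_sum; apply: eq_bigr => i _.
rewrite binomR_nat ?natrM ?natrX //.
exact: leq_trans (ltn_ord i) hk.
Qed.

Lemma cbin_nat k : ('C(k.+1.*2, k.+1) * k.+1 = 2 * k.*2.+1 * 'C(k.*2, k))%N.
Proof.
have h1 := mul_bin_diag k.*2.+2 k.
have h2 := mul_bin_diag k.*2.+1 k.
have h3 : 'C(k.*2.+1, k.+1) = 'C(k.*2.+1, k).
  rewrite -[in RHS]bin_sub; last by rewrite -addnn; lia.
  by congr 'C(_, _); rewrite -addnn; lia.
rewrite /= in h1 h2; rewrite h3 in h2.
apply/eqP; rewrite -(eqn_pmul2l (ltn0Sn k)); apply/eqP.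
rewrite doubleS.
move: ('C(k.*2, k)) ('C(k.*2.+1, k)) ('C(k.*2.+2, k.+1)) h1 h2 => Y Z X h1 h2.
rewrite -addnn in h1 h2 *.
nia.
Qed.

Lemma cbin_Fp p (hp : prime p) n (hp2 : n.*2.+1 = p) k : (k < p)%N ->
  ('C(k.*2, k))%:R = (-4) ^+ k * ('C(n, k))%:R :> 'F_p.
Proof.
elim: k => [|k IH] hk; first by rewrite !bin0 expr0 mul1r.
have nz : (k.+1%:R : 'F_p) != 0 by apply: Fp_nz => //; rewrite ltn0Sn.
apply: (mulIf nz).
rewrite -natrM cbin_nat natrM IH; last exact: ltnW hk.
rewrite -mulrA [_ * k.+1%:R]mulrC binL.
have e : (n.*2.+1)%:R = 0 :> 'F_p by rewrite hp2 pchar_Fp_0.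
apply/eqP; rewrite -subr_eq0; apply/eqP.
transitivity ((-4) ^+ k * ('C(n, k))%:R * 2 * (n.*2.+1)%:R : 'F_p); last by rewrite e mulr0.
rewrite exprS -!addnn.
move: ((-4 : 'F_p) ^+ k) (('C(n, k))%:R : 'F_p) => a b; ring.
Qed.

Lemma Dsq_nat m k : (Dn k m ^ 2 = \sum_(j < m.+1) cj m j * 'C(k + j, j.*2))%N.
Proof.
apply/eqP; rewrite -(eqr_nat rat) natrX.
case: (main_id m k) => -> _ _; rewrite /Rs natr_sum; apply/eqP; apply: eq_bigr => j _.
by rewrite natrM.
Qed.

Lemma pw n j : ((if n <= j.*2 then 'C(j, j.*2 - n) else 0) = (if j <= n then 'C(j, n - j) else 0))%N.
Proof.
rewrite -!addnn.
case: (leqP j n) => hjn.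
  case: (leqP n (j + j)) => hn.
    rewrite -[in RHS]bin_sub; last by lia.
    by congr 'C(_, _); lia.
  by rewrite bin_small //; lia.
have -> : (n <= j + j)%N by lia.
by rewrite bin_small //; lia.
Qed.

Theorem mainTheorem2 (p : nat) (hp : prime p) (hodd : odd p) (x : 'F_p) :
  \sum_(k < p) ('C(k.*2, k))%:R / 4 ^+ k * (dpoly k x) ^+ 2
  = (-1) ^+ ((p - 1)./2) *
    \sum_(j < ((p - 1)./2).+1)
       binomR x j * binomR (x + j%:R) j * ('C(j, (p - 1)./2 - j))%:R * 4 ^+ j.
Proof.
set n := (p - 1)./2.
have hp2 : (n.*2.+1 = p)%N.
  rewrite /n; have := odd_double_half p; rewrite hodd /= => h.
  by rewrite -[in RHS]h -{1}h subn1 /= doubleK.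
have hnp : (n < p)%N by rewrite -hp2 -addnn; lia.
have h4 : (4 : 'F_p) != 0.
  apply/negP; rewrite -(dvdn_pcharf (pchar_Fp hp)) => h.
  have hle : (p <= 4)%N by apply: dvdn_leq.
  by move: hp hodd hle h; case: (p) => [|[|[|[|[|q]]]]].
rewrite -(natr_Zp x); move: (nat_of_ord x) => m.
have eL : forall k : 'I_p, ('C(k.*2, k))%:R / 4 ^+ k * dpoly k (m%:R : 'F_p) ^+ 2
   = (-1) ^+ k * ('C(n, k))%:R * ((Dn k m ^ 2)%:R) :> 'F_p.
  move=> k; rewrite (@dpoly_nat p hp k m) // (@cbin_Fp p hp n hp2 k) // natrX.
  rewrite -[-4 : 'F_p]mulN1r exprMn.
  move: (expf_neq0 k h4); move: ((4 : 'F_p) ^+ k) ((-1 : 'F_p) ^+ k) (('C(n, k))%:R : 'F_p) ((Dn k m)%:R : 'F_p) => t a b c ht.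
  by field.
rewrite (eq_bigr _ (fun k _ => eL k)).
rewrite (@sum_trunc _ (fun k => (-1) ^+ k * ('C(n, k))%:R * ((Dn k m ^ 2)%:R : 'F_p)) n.+1 p hnp); last first.
  by move=> k hk; rewrite bin_small // mulr0 mul0r.
under eq_bigr do rewrite Dsq_nat natr_sum mulr_sumr.
rewrite exchange_big /=.
have eR : forall j : 'I_m.+1, \sum_(k < n.+1) (-1) ^+ k * ('C(n, k))%:R * ((cj m j * 'C(k + j, j.*2))%:R : 'F_p)
    = (cj m j)%:R * hs _ n j j.*2.
  move=> j; rewrite /hs mulr_sumr; apply: eq_bigr => k _; rewrite natrM.
  move: ((-1 : 'F_p) ^+ k) (('C(n, k))%:R : 'F_p) ((cj m j)%:R : 'F_p) (('C(k + j, j.*2))%:R : 'F_p) => a b c d; ring.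
rewrite (eq_bigr _ (fun j _ => eR j)).
have eR2 : forall j : 'I_n.+1, binomR (m%:R : 'F_p) j * binomR (m%:R + j%:R) j * ('C(j, n - j))%:R * 4 ^+ j
    = (cj m j * 'C(j, n - j))%:R.
  move=> j; have hj : (j < p)%N := leq_trans (ltn_ord j) hnp.
  rewrite -natrD !(@binomR_nat p hp) // /cj !natrM natrX.
  move: (('C(m, j))%:R : 'F_p) (('C(m + j, j))%:R : 'F_p) (('C(j, n - j))%:R : 'F_p) => a b c.
  ring.
rewrite (eq_bigr _ (fun j _ => eR2 j)) mulr_sumr.
pose G j := (cj m j * (if (j <= n)%N then 'C(j, n - j) else 0))%N.
have eA : forall j : 'I_m.+1, (cj m j)%:R * hs _ n j j.*2 = (-1) ^+ n * (G j)%:R :> 'F_p.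
  move=> j; rewrite hsE (_ : (if (n <= j.*2)%N then ('C(j, j.*2 - n))%:R else 0)
           = (if (n <= j.*2)%N then 'C(j, j.*2 - n) else 0)%:R :> 'F_p); last by case: ifP.
  rewrite pw /G natrM mulrCA.
  done.
have eB : forall j : 'I_n.+1, (-1) ^+ n * ((cj m j * 'C(j, n - j))%:R : 'F_p) = (-1) ^+ n * (G j)%:R.
  by move=> j; rewrite /G -ltnS ltn_ord.
rewrite (eq_bigr _ (fun j _ => eA j)) (eq_bigr _ (fun j _ => eB j)).
rewrite (@sum_trunc _ (fun j => (-1) ^+ n * (G j)%:R) (minn m.+1 n.+1) m.+1); last 2 first.
- by rewrite geq_minl.
- move=> j hj; rewrite /G.
  case: (leqP j n) => hjn; last by rewrite muln0 mulr0.
  rewrite /cj bin_small ?mul0n ?mulr0 //; move: hj; rewrite geq_min; case/orP => h; lia.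
rewrite (@sum_trunc _ (fun j => (-1) ^+ n * (G j)%:R) (minn m.+1 n.+1) n.+1) //.
- by rewrite geq_minr.
- move=> j hj; rewrite /G.
  case: (leqP j n) => hjn; last by rewrite muln0 mulr0.
  rewrite /cj bin_small ?mul0n ?mulr0 //; move: hj; rewrite geq_min; case/orP => h; lia.
Qed.
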